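(* The sequence $\rho_d$ satisfies $\min_{d\geqslant2}\rho_d>0$, and there is a numerical constant $C>0$ such that $\frac1{C(d+2)^2}\leqslant1-\rho_d$ for all $d\geqslant2$.
   Context: Let $g(\theta)=\cos^{-1}\!\big(\frac{(\pi-\theta)\cos\theta+\sin\theta}{\pi}\big)$, $\breve\theta_0=\pi$, $\breve\theta_i=g(\breve\theta_{i-1})$ for $i\geqslant1$, and $\rho_d:=\frac{2\sin\breve\theta_d}{\pi}+\frac{\pi-2\breve\theta_d}{\pi}\sum_{i=0}^{d-1}\frac{\sin\breve\theta_i}{\pi}\prod_{j=i+1}^{d-1}\frac{\pi-\breve\theta_j}{\pi}$. *)

(* Defs.v *)
From Stdlib Require Import Reals List.
Open Scope R_scope.

Definition g (t : R) : R := acos (((PI - t) * cos t + sin t) / PI).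

Fixpoint theta (i : nat) : R :=
  match i with
  | O => PI
  | S k => g (theta k)
  end.

Definition sumR (a b : nat) (f : nat -> R) : R :=
  fold_right Rplus 0 (map f (seq a (b - a))).

Definition prodR (a b : nat) (f : nat -> R) : R :=
  fold_right Rmult 1 (map f (seq a (b - a))).

Definition rho (d : nat) : R :=
  2 * sin (theta d) / PI
  + (PI - 2 * theta d) / PI *
    sumR 0 d (fun i => sin (theta i) / PI *
                       prodR (S i) d (fun j => (PI - theta j) / PI)).

(* Main.v *)
Require Import Defs.
From Stdlib Require Import Reals Lra Psatz List.
From Coquelicot Require Import Coquelicot.
Open Scope R_scope.

Lemma INR_Z n z : Z.of_nat n = z -> INR n = IZR z.
Proof. intros <-. apply INR_IZR_INZ. Qed.
Ltac fixfact :=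
  repeat match goal with |- context [INR (Factorial.fact ?n)] =>
    let z := eval vm_compute in (Z.of_nat (Factorial.fact n)) in
    rewrite (INR_Z (Factorial.fact n) z ltac:(vm_compute; reflexivity)) end;
  repeat match goal with |- context [(?a ^ (2 * ?i))%R] =>
    let k := eval vm_compute in (2*i)%nat in change (2*i)%nat with k end;
  repeat match goal with |- context [(?a ^ (2 * ?i + 1))%R] =>
    let k := eval vm_compute in (2*i+1)%nat in change (2*i+1)%nat with k end.
Lemma cos_approx4 a : cos_approx a 4 = 1 - a^2/2 + a^4/24 - a^6/720 + a^8/40320.
Proof. cbv [cos_approx sum_f_R0 cos_term]. fixfact. field. Qed.
Lemma cos_approx3 a : cos_approx a 3 = 1 - a^2/2 + a^4/24 - a^6/720.
Proof. cbv [cos_approx sum_f_R0 cos_term]. fixfact. field. Qed.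
Lemma sin_approx4 a : sin_approx a 4 = a - a^3/6 + a^5/120 - a^7/5040 + a^9/362880.
Proof. cbv [sin_approx sum_f_R0 sin_term]. fixfact. field. Qed.

Lemma PI_ge3 : 3 <= PI.
Proof. pose proof PI2_3_2. lra. Qed.
Lemma PI_le4 : PI <= 4.
Proof. apply PI_4. Qed.

Lemma cub x : 0 <= x <= PI/2 -> cos x <= 1 - x^2/2 + x^4/24.
Proof. intros H. pose proof PI_le4.
  assert (x^2 <= 4) by nra.
  destruct (COS x) as [_ H2]; try lra.
  unfold cos_ub in H2. rewrite cos_approx4 in H2.
  assert (x^6 * (x^2 - 56) <= 0). { assert (0 <= x^6) by (apply pow_le; lra). nra. }
  nra. Qed.

Lemma clb x : 0 <= x <= PI/2 -> 1 - x^2/2 + x^4/24 - x^6/720 <= cos x.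
Proof. intros H. destruct (COS x) as [H2 _]; try lra.
  unfold cos_lb in H2. rewrite cos_approx3 in H2. lra. Qed.

Lemma sub x : 0 <= x <= PI -> sin x <= x - x^3/6 + x^5/120.
Proof. intros H. pose proof PI_le4.
  assert (x^2 <= 16) by nra.
  destruct (SIN x) as [_ H2]; try lra.
  unfold sin_ub in H2. rewrite sin_approx4 in H2.
  assert (x^7 * (x^2 - 72) <= 0). { assert (0 <= x^7) by (apply pow_le; lra). nra. }
  nra. Qed.

Lemma mono_le (f f' : R -> R) a b :
  (forall c, a <= c <= b -> derivable_pt_lim f c (f' c)) ->
  (forall c, a < c < b -> 0 <= f' c) ->
  forall x y, a <= x -> x <= y -> y <= b -> f x <= f y.
Proof. intros Hd Hs x y Hx Hxy Hy.
  destruct (Req_dec x y) as [->|Hne]; [lra|].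
  destruct (MVT_cor2 f f' x y) as [c [Hc1 Hc2]]; [lra| intros; apply Hd; lra |].
  assert (0 <= f' c) by (apply Hs; lra). nra. Qed.

Definition k1 (t : R) : R := ((PI - t) * cos t + sin t) / PI.
Definition phi (t : R) : R := 2 * sin t / PI + (PI - 2 * t) / PI * cos t.

Lemma k1_dec x y : 0 <= x -> x <= y -> y <= PI -> k1 y <= k1 x.
Proof. intros. assert (- k1 x <= - k1 y); [|lra].
  apply (mono_le (fun t => - k1 t) (fun t => (PI - t) * sin t / PI) 0 PI); auto.
  - intros c _. apply is_derive_Reals. unfold k1. auto_derive; auto. field. apply PI_neq0.
  - intros c Hc. assert (0 < sin c) by (apply sin_gt_0; pose proof PI_RGT_0; lra). pose proof PI_RGT_0.
    apply Rmult_le_pos; [|left; apply Rinv_0_lt_compat; lra]. nra.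
Qed.

Lemma h_nonneg t : 0 <= t <= PI -> t * cos t <= sin t.
Proof. intros Ht.
  assert (sin 0 - 0 * cos 0 <= sin t - t * cos t); [|rewrite sin_0 in *; lra].
  apply (mono_le (fun t => sin t - t * cos t) (fun t => t * sin t) 0 PI); try lra.
  - intros c _. apply is_derive_Reals. auto_derive; auto. ring.
  - intros c Hc. assert (0 < sin c) by (apply sin_gt_0; pose proof PI_RGT_0; lra). nra.
Qed.

Lemma phi_dec x y : 0 <= x -> x <= y -> y <= PI/2 -> phi y <= phi x.
Proof. intros. assert (- phi x <= - phi y); [|lra].
  pose proof PI_RGT_0.
  apply (mono_le (fun t => - phi t) (fun t => (PI - 2*t) * sin t / PI) 0 (PI/2)); auto.
  - intros c _. apply is_derive_Reals. unfold phi. auto_derive; auto. field. apply PI_neq0.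
  - intros c Hc. assert (0 < sin c) by (apply sin_gt_0; pose proof PI_RGT_0; lra).
    apply Rmult_le_pos; [|left; apply Rinv_0_lt_compat; lra]. nra.
Qed.

Lemma k1_0 : k1 0 = 1.
Proof. unfold k1. rewrite cos_0, sin_0. field. apply PI_neq0. Qed.
Lemma k1_PI : k1 PI = 0.
Proof. unfold k1. rewrite sin_PI. field. apply PI_neq0. Qed.

Lemma k1_range t : 0 <= t <= PI -> 0 <= k1 t <= 1.
Proof. intros. pose proof (k1_dec 0 t). pose proof (k1_dec t PI).
  rewrite k1_0 in *. rewrite k1_PI in *. split; [apply H1|apply H0]; lra. Qed.

Lemma theta_S d : theta (S d) = acos (k1 (theta d)).
Proof. reflexivity. Qed.

Lemma theta_range d : 0 <= theta d <= PI.
Proof. destruct d. simpl. pose proof PI_RGT_0. lra. apply acos_bound. Qed.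

Lemma cos_theta_S d : cos (theta (S d)) = k1 (theta d).
Proof. rewrite theta_S. apply cos_acos. pose proof (k1_range _ (theta_range d)). lra. Qed.

Lemma theta_dec d : theta (S d) <= theta d.
Proof. destruct (Rle_lt_dec (theta (S d)) (theta d)) as [H|H]; auto.
  pose proof (theta_range d). pose proof (theta_range (S d)).
  pose proof (cos_decreasing_1 (theta d) (theta (S d)) ltac:(lra) ltac:(lra) ltac:(lra) ltac:(lra) H).
  rewrite cos_theta_S in H2. pose proof (h_nonneg _ H0).
  assert (k1 (theta d) - cos (theta d) = (sin (theta d) - theta d * cos (theta d)) / PI).
  { unfold k1. field. apply PI_neq0. }
  assert (0 <= (sin (theta d) - theta d * cos (theta d)) / PI).
  { apply Rmult_le_pos. lra. left. apply Rinv_0_lt_compat. apply PI_RGT_0. }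
  lra. Qed.

Lemma theta_le d m : (d <= m)%nat -> theta m <= theta d.
Proof. induction 1. lra. pose proof (theta_dec m). lra. Qed.

Lemma theta_1 : theta 1 = PI/2.
Proof. rewrite theta_S. simpl theta. rewrite k1_PI. apply acos_0. Qed.

Lemma theta_half d : (1 <= d)%nat -> 0 <= theta d <= PI/2.
Proof. intros. pose proof (theta_le 1 d H). rewrite theta_1 in H0.
  pose proof (theta_range d). lra. Qed.

Lemma fold_plus a l : fold_right Rplus a l = fold_right Rplus 0 l + a.
Proof. induction l; simpl; lra. Qed.

Lemma sumR_S d F : sumR 0 (S d) F = sumR 0 d F + F d.
Proof. unfold sumR. rewrite !Nat.sub_0_r. rewrite seq_S, map_app, fold_right_app.
  simpl. rewrite fold_plus. lra. Qed.

Lemma prodR_S i d h : (i <= d)%nat -> prodR i (S d) h = prodR i d h * h d.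
Proof. intros Hi. unfold prodR.
  replace (S d - i)%nat with (S (d - i)) by lia.
  rewrite seq_S, map_app, fold_right_app. simpl.
  replace (i + (d - i))%nat with d by lia.
  generalize (seq i (d - i)). intros l. induction l; simpl; [ring | rewrite IHl; ring]. Qed.

Lemma prodR_nil i h : prodR i i h = 1.
Proof. unfold prodR. rewrite Nat.sub_diag. reflexivity. Qed.

Lemma sum_scale (G : nat -> R) c l :
  fold_right Rplus 0 (map (fun i => G i * c) l) = fold_right Rplus 0 (map G l) * c.
Proof. induction l; simpl; lra. Qed.

Definition hh (j : nat) : R := (PI - theta j) / PI.
Definition Sd (d : nat) : R :=
  sumR 0 d (fun i => sin (theta i) / PI * prodR (S i) d (fun j => (PI - theta j) / PI)).

Lemma rho_Sd d : rho d = 2 * sin (theta d) / PI + (PI - 2 * theta d) / PI * Sd d.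
Proof. reflexivity. Qed.

Lemma Sd_S d : Sd (S d) = Sd d * hh d + sin (theta d) / PI.
Proof. unfold Sd. rewrite sumR_S. rewrite prodR_nil. rewrite Rmult_1_r. f_equal.
  unfold sumR. rewrite !Nat.sub_0_r. rewrite <- sum_scale. f_equal.
  apply map_ext_in. intros i Hi. apply in_seq in Hi.
  rewrite prodR_S by lia. unfold hh. ring. Qed.

Lemma Sd_cos d : (1 <= d)%nat -> Sd d = cos (theta d).
Proof. induction 1.
  - rewrite Sd_S. change (Sd 0) with 0. change (theta 0) with PI. rewrite sin_PI, theta_1, cos_PI2. field. apply PI_neq0.
  - rewrite Sd_S, IHle, cos_theta_S. unfold hh, k1. field. apply PI_neq0. Qed.

Lemma rho_phi d : (1 <= d)%nat -> rho d = phi (theta d).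
Proof. intros. rewrite rho_Sd, Sd_cos by auto. reflexivity. Qed.

Lemma polyA p x y : 3 <= p <= 4 -> 0 < x <= 1/2 -> y * (1 + x) = x -> 0 < y ->
  (p-x)*(1-x^2/2+x^4/24) + (x - x^3/6 + x^5/120) <= p*(1 - y^2/2 + y^4/24 - y^6/720).
Proof. intros Hp Hx Hy Hy0.
  assert (y < x) by nra.
  assert (Hd : (x^2 - y^2) * (1+x)^2 = x^3 * (2 + x)).
  { assert (y = x / (1+x)) by (field_simplify_eq; lra). subst y. field. lra. }
  assert (H2 : x^2 - y^2 >= x^3 * 10/9 ).
  { assert (8 - 11*x - 10*x^2 >= 0) by nra.
    assert (0 < (1+x)^2) by nra.
    apply Rle_ge. apply Rmult_le_reg_r with ((1+x)^2). nra. rewrite Hd. nra. }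
  assert (y^4 >= 0) by nra. assert (y^6 <= x^4/4).
  { assert (y^6 <= x^6). { apply pow_incr. lra. } assert (x^2 <= 1/4) by nra. nra. }
  assert (x^5 >= 0) by nra.
  assert (p * x^4 <= 2 * x^3) by nra.
  assert (p * (x^2 - y^2) >= p * (x^3 * 10/9)) by nra.
  assert (p * y^4 >= 0) by nra.
  assert (p * y^6 <= p * (x^4/4)) by nra.
  assert (p * x^3 >= 3 * x^3) by nra.
  assert (x^3 > 0) by (apply pow_lt; lra). lra.
Qed.

Lemma k1_le_cos (n : R) : 2 <= n -> k1 (1/n) <= cos (1/(n+1)).
Proof. intros Hn. pose proof PI_ge3. pose proof PI_le4.
  set (x := 1/n). set (y := 1/(n+1)).
  assert (0 < x <= 1/2). { unfold x. split. apply Rdiv_lt_0_compat; lra.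
    apply Rmult_le_reg_r with n. lra. field_simplify; lra. }
  assert (0 < y) by (unfold y; apply Rdiv_lt_0_compat; lra).
  assert (y * (1 + x) = x) by (unfold x, y; field; lra).
  assert (y < x) by nra.
  pose proof (cub x ltac:(lra)). pose proof (sub x ltac:(lra)).
  pose proof (clb y ltac:(lra)).
  pose proof (polyA PI x y ltac:(lra) ltac:(lra) ltac:(lra) ltac:(lra)).
  unfold k1. apply Rmult_le_reg_r with PI. lra.
  unfold Rdiv at 1. rewrite Rmult_assoc, Rinv_l by lra. nra.
Qed.

Lemma theta_lb d : 1 / (INR d + 2) <= theta d.
Proof. induction d.
  - simpl. pose proof PI_ge3. lra.
  - pose proof (pos_INR d). rewrite S_INR.
    pose proof (theta_range d). pose proof (theta_range (S d)).
    assert (Hx : 0 <= 1 / (INR d + 2) <= PI).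
    { split. apply Rdiv_le_0_compat; lra. lra. }
    pose proof (k1_dec (1 / (INR d + 2)) (theta d) ltac:(lra) IHd ltac:(lra)).
    pose proof (k1_le_cos (INR d + 2) ltac:(lra)).
    replace (INR d + 2 + 1) with (INR d + 1 + 2) in H3 by ring.
    rewrite <- cos_theta_S in H2.
    destruct (Rle_lt_dec (1 / (INR d + 1 + 2)) (theta (S d))) as [Hl|Hl]; auto.
    assert (0 <= 1 / (INR d + 1 + 2)) by (apply Rdiv_le_0_compat; lra).
    assert (1 / (INR d + 1 + 2) <= 1 / (INR d + 2)).
    { apply Rmult_le_reg_r with ((INR d + 1 + 2) * (INR d + 2)). nra. field_simplify; lra. }
    pose proof (cos_decreasing_1 (theta (S d)) (1 / (INR d + 1 + 2)) ltac:(lra) ltac:(lra) ltac:(lra) ltac:(lra) Hl). lra.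
Qed.

Lemma polyB t : 0 <= t <= 1.6 ->
  t^2/20 <= 1 - (1 - t^2/2 + t^4/24) - 2/3 * ((t - t^3/6 + t^5/120) - t * (1 - t^2/2 + t^4/24 - t^6/720)).
Proof. intros H.
  assert (HQ : 0 <= 9/20 - 2*t/9 - t^2/24 + t^3/45 - t^5/1080).
  { assert (t^2 <= 2.56) by nra. assert (t^5 <= 10.5) by (assert (t^3 <= 4.1) by nra; nra).
    destruct (Rle_lt_dec t 1).
    - assert (t^2 <= 1) by nra. assert (0 <= t^3) by (apply pow_le; lra). lra.
    - assert (t^3 >= t^2) by nra. lra. }
  assert (0 <= t^2 * (9/20 - 2*t/9 - t^2/24 + t^3/45 - t^5/1080)) by (apply Rmult_le_pos; [nra|lra]).
  lra. Qed.

Lemma one_minus_phi t : 0 <= t <= 3/2 -> t^2/20 <= 1 - phi t.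
Proof. intros Ht0. pose proof PI_ge3. pose proof PI_le4. pose proof PI2_3_2.
  assert (Ht : 0 <= t <= PI/2) by lra.
  pose proof (cub t Ht). pose proof (clb t Ht). pose proof (sub t ltac:(lra)).
  pose proof (h_nonneg t ltac:(lra)).
  pose proof (polyB t ltac:(lra)).
  assert (1 - phi t = 1 - cos t - 2 / PI * (sin t - t * cos t)) by (unfold phi; field; lra).
  assert (2 / PI * (sin t - t * cos t) <= 2/3 * (sin t - t * cos t)).
  { apply Rmult_le_compat_r. lra. apply Rmult_le_reg_r with (3 * PI). lra. field_simplify; lra. }
  nra.
Qed.

Lemma theta_2_le : theta 2 <= 3/2.
Proof. pose proof PI2_3_2 as P1. pose proof PI_ge3 as P2.
  destruct (Rle_lt_dec (theta 2) (3/2)) as [Hc|Hc]; auto.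
  pose proof (theta_range 2) as Hr.
  pose proof (cos_decreasing_1 (3/2) (theta 2) ltac:(lra) ltac:(lra) ltac:(lra) ltac:(lra) Hc) as Hk.
  rewrite cos_theta_S, theta_1 in Hk. unfold k1 in Hk. rewrite cos_PI2, sin_PI2 in Hk.
  pose proof (cub (3/2) ltac:(lra)).
  assert (1/4 <= (0 + 1)/PI). { pose proof PI_le4. unfold Rdiv. rewrite Rplus_0_l, !Rmult_1_l. apply Rinv_le_contravar; lra. }
  replace ((PI - PI/2) * 0 + 1) with (0 + 1) in Hk by ring.
  lra. Qed.

Theorem lemma22 :
  (exists d0 : nat, (2 <= d0)%nat /\ 0 < rho d0 /\
     forall d : nat, (2 <= d)%nat -> rho d0 <= rho d) /\
  (exists C : R, 0 < C /\
     forall d : nat, (2 <= d)%nat -> 1 / (C * (INR d + 2) ^ 2) <= 1 - rho d).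
Proof.
  pose proof PI_ge3. pose proof theta_2_le. pose proof PI2_3_2.
  split.
  - exists 2%nat. split; [lia|]. split.
    + rewrite rho_phi by lia. pose proof (theta_half 2 ltac:(lia)).
      pose proof (phi_dec (theta 2) (PI/2) ltac:(lra) ltac:(lra) ltac:(lra)).
      unfold phi at 1 in H3. rewrite sin_PI2, cos_PI2 in H3.
      assert (0 < 2 * 1 / PI + (PI - 2 * (PI / 2)) / PI * 0).
      { replace (2 * 1 / PI + (PI - 2 * (PI / 2)) / PI * 0) with (2 / PI) by (field; lra).
        apply Rdiv_lt_0_compat; lra. }
      lra.
    + intros d Hd. rewrite !rho_phi by lia.
      pose proof (theta_le 2 d Hd). pose proof (theta_range d).
      apply phi_dec; lra.
  - exists 20. split; [lra|]. intros d Hd.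
    rewrite rho_phi by lia.
    pose proof (theta_le 2 d Hd). pose proof (theta_range d).
    pose proof (one_minus_phi (theta d) ltac:(lra)).
    pose proof (theta_lb d). pose proof (pos_INR d).
    assert (1 / (INR d + 2) * (1 / (INR d + 2)) <= theta d * theta d).
    { apply Rmult_le_compat; try lra. apply Rdiv_le_0_compat; lra. apply Rdiv_le_0_compat; lra. }
    replace (1 / (20 * (INR d + 2) ^ 2)) with ((1 / (INR d + 2) * (1 / (INR d + 2))) / 20)
      by (field; lra).
    nra.
Qed.
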